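(* Let $c\ge1$ and let $\Gamma$ be a $c$-uniform unoriented hypergraph with $N$ vertices, $M\ge1$ edges and no isolated vertices, with average degree $\overline{\deg}$, smallest edge Laplacian eigenvalue $\mu_1<c/\overline{\deg}$, and strong edge coloring number $\chi'$, and suppose $\chi'=\dfrac{c-\mu_1}{c/\overline{\deg}-\mu_1}$. (1) If $\mu_1=0$, then $\Gamma$ is $k$-regular for some $k$ (namely $k=\overline{\deg}$), $\chi'=k$, and $0$ is an eigenvalue of $L^1$ with multiplicity at least $k-1$. (2) If $\mu_1>0$, then $\mu_1$ is an eigenvalue of $L^1$ with multiplicity at least $\chi'-1$, and also an eigenvalue of the normalized Laplacian $L$ with multiplicity at least $\chi'-1$.
   Context: A hypergraph has finite vertex set $V$ and edge set $E\subseteq\mathcal P(V)$; it is $c$-uniform if $|e|=c$ for all $e$, and unoriented means all incidences have orientation $+1$, so the incidence matrix $\mathcal I$ ($N\times M$) has $\mathcal I_{v,e}=1$ if $v\in e$ and $0$ otherwise. $\deg v=|\{e: v\in e\}|\ge1$, $D=\mathrm{diag}(\deg v)$, $\overline{\deg}=\frac1N\sum_v\deg v$; $\Gamma$ is $k$-regular if every vertex has degree $k$. The normalized Laplacian is $L=D^{-1}\mathcal I\mathcal I^\top$ ($N\times N$) and the edge Laplacian is $L^1=\mathcal I^\top D^{-1}\mathcal I$ ($M\times M$), with eigenvalues $0\le\mu_1\le\dots\le\mu_M$. A proper strong $k$-edge-coloring is a map $c'\colon E\to\{1,\dots,k\}$ such that distinct edges of the same color are disjoint; $\chi'$ is the least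 such $k$. *)

(* Defs.v *)
From HB Require Import structures.
From mathcomp Require Import all_boot all_order all_algebra.
Set Implicit Arguments. Unset Strict Implicit. Unset Printing Implicit Defensive.
Import Order.TTheory GRing.Theory Num.Theory.
Local Open Scope ring_scope.

Section Hypergraph.
Variable V : finType.
Variable E : {set {set V}}.

Definition uniform (c : nat) : Prop := forall e, e \in E -> #|e| = c.

Definition hdeg (v : V) : nat := #|[set e in E | v \in e]|.

Definition no_isolated : Prop := forall v, (0 < hdeg v)%N.

Definition avg_deg (R : numFieldType) : R :=
  (\sum_(v : V) hdeg v)%:R / #|V|%:R.

Definition incidence (R : numFieldType) : 'M[R]_(#|V|, #|E|) :=
  \matrix_(i < #|V|, j < #|E|)
    ((enum_val i \in (enum_val j : {set V})) : nat)%:R.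

Definition Dinv (R : numFieldType) : 'M[R]_(#|V|) :=
  \matrix_(i, j) ((i == j)%:R / (hdeg (enum_val i))%:R).

Definition norm_laplacian (R : numFieldType) : 'M[R]_(#|V|) :=
  Dinv R *m incidence R *m (incidence R)^T.

Definition edge_laplacian (R : numFieldType) : 'M[R]_(#|E|) :=
  (incidence R)^T *m Dinv R *m incidence R.

Definition strong_edge_colorable (k : nat) : Prop :=
  exists col : {set V} -> 'I_k,
    forall e f, e \in E -> f \in E -> e != f -> col e = col f -> [disjoint e & f].

Definition is_strong_chromatic_index (chi : nat) : Prop :=
  strong_edge_colorable chi /\ forall k, strong_edge_colorable k -> (chi <= k)%N.

(* geometric multiplicity of a as eigenvalue of a square matrix *)
Definition eigmult (R : fieldType) n (A : 'M[R]_n) (a : R) : nat :=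
  \rank (eigenspace A a).

Definition smallest_eigenvalue (R : numFieldType) n (A : 'M[R]_n) (mu : R) : Prop :=
  eigenvalue A mu /\ forall a, eigenvalue A a -> mu <= a.

End Hypergraph.

(* Main.v *)
Require Import Defs.
From HB Require Import structures.
From mathcomp Require Import all_boot all_order all_algebra.
From mathcomp Require Import ring lra.
From mathcomp Require Import complex.
Set Implicit Arguments. Unset Strict Implicit. Unset Printing Implicit Defensive.
Import Order.TTheory GRing.Theory Num.Theory.
Local Open Scope ring_scope.

Section Spec.
Variable R : rcfType.
Local Notation C := (R[i]).
Local Notation f := (real_complex R).

Lemma f_real (r : R) : f r \is Num.real.
Proof. by rewrite /= complex_real. Qed.

Lemma f_conj (r : R) : (f r)^* = f r.
Proof. exact/conj_Creal/f_real. Qed.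

Lemma psd_min n (S : 'M[R]_n) (mu : R) :
  S^T = S -> (forall a, eigenvalue S a -> mu <= a) ->
  forall x : 'rV[R]_n, 0 <= (x *m (S - mu%:M) *m x^T) 0 0 /\
    ((x *m (S - mu%:M) *m x^T) 0 0 = 0 -> x *m (S - mu%:M) = 0).
Proof.
move=> Ssym Smin x.
set A := S - mu%:M.
have Asym : A^T = A by rewrite /A linearB /= Ssym tr_scalar_mx.
set Ac := map_mx f A.
have Acsym : Ac \is symmetricmx.
  by apply/is_hermitianmxP; rewrite expr0 scale1r map_mx_id // /Ac map_trmx Asym.
have Acreal : Ac \is a mxOver Num.real.
  by apply/mxOverP => i j; rewrite mxE f_real.
have /orthomx_spectralP := symmetric_normalmx Acsym Acreal.
set P := spectralmx Ac; set d := spectral_diag Ac => AcE.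
have Puni : P \is unitarymx by apply: spectral_unitarymx.
have Punit : P \in unitmx by apply: spectral_unit.
have d_ge0 : forall j, 0 <= d 0 j.
  move=> j.
  have dreal : d 0 j \is Num.real.
    have := hermitian_spectral_diag_real (realsym_hermsym Acsym Acreal).
    by move/mxOverP => /(_ 0 j).
  have eigd : eigenvalue Ac (d 0 j).
    apply/eigenvalueP; exists (row j P).
      rewrite -row_mul {1}AcE !mulmxA mulmxV // mul1mx.
      by rewrite row_mul row_diag_mx -scalemxAl -rowE.
    apply/eqP => hr.
    have : row j (P *m invmx P) = 0 by rewrite row_mul hr mul0mx.
    rewrite mulmxV // => /rowP /(_ j); rewrite !mxE eqxx /= => /eqP.
    by rewrite oner_eq0.
  have rE : d 0 j = f (complex.Re (d 0 j)) by rewrite RRe_real.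
  move: eigd; rewrite rE eigenvalue_root_char /Ac -map_char_poly fmorph_root.
  rewrite -eigenvalue_root_char => eigA.
  have : eigenvalue S (mu + complex.Re (d 0 j)).
    by move: eigA; rewrite /eigenvalue /eigenspace /A raddfD opprD addrA.
  move/Smin; rewrite lerDl => h.
  by rewrite rE ler0c.
pose ct m k (M : 'M[C]_(m, k)) := map_mx Num.conj (M^T).
have ctK m k (M : 'M[C]_(m, k)) : ct _ _ (ct _ _ M) = M.
  by apply/matrixP => i j; rewrite !mxE conjCK.
have ctM m k l (M : 'M[C]_(m, k)) (N : 'M[C]_(k, l)) :
    ct _ _ (M *m N) = ct _ _ N *m ct _ _ M.
  by rewrite /ct trmx_mul map_mxM.
set u := map_mx f x.
have ctu : ct _ _ u = map_mx f x^T.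
  by apply/matrixP => i j; rewrite !mxE f_conj.
have invP : invmx P = ct _ _ P by rewrite invmx_unitary.
set w := u *m ct _ _ P.
have uAc : u *m Ac = w *m diag_mx d *m P by rewrite {1}AcE invP !mulmxA.
have Pu : P *m ct _ _ u = ct _ _ w by rewrite /w ctM ctK.
have qE : f ((x *m A *m x^T) 0 0) =
    \sum_j d 0 j * (w 0 j * (w 0 j)^* ).
  have -> : f ((x *m A *m x^T) 0 0) = (u *m Ac *m ct _ _ u) 0 0.
    by rewrite ctu -!map_mxM [RHS]mxE.
  rewrite uAc -mulmxA Pu mxE; apply: eq_bigr => j _.
  by rewrite mul_mx_diag !mxE mulrCA mulrA.
have Qge0 : 0 <= \sum_j d 0 j * (w 0 j * (w 0 j)^* ).
  by apply: sumr_ge0 => j _; apply: mulr_ge0 => //; apply: mul_conjC_ge0.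
split; first by rewrite -ler0c qE.
move=> q0; move: qE; rewrite q0 => /esym /eqP.
rewrite (rmorph0 f) psumr_eq0 => [/allP hall|j _]; last first.
  by apply: mulr_ge0 => //; apply: mul_conjC_ge0.
have wd0 : w *m diag_mx d = 0.
  apply/matrixP => i j; rewrite ord1 mul_mx_diag [LHS]mxE [RHS]mxE.
  have := hall j (mem_index_enum j); rewrite mulf_eq0 mul_conjC_eq0.
  by case/orP => /eqP ->; rewrite ?mul0r ?mulr0.
have : map_mx f (x *m A) = 0 by rewrite map_mxM -/u -/Ac uAc wd0 !mul0mx.
move/matrixP => h; apply/matrixP => i j; have := h i j.
by rewrite !mxE => -[].
Qed.
End Spec.

Lemma qexp (R : fieldType) m (A : 'M[R]_m) (y w : 'rV[R]_m) (lam t : R) :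
  A^T = A -> w *m A = lam *: w ->
  ((y - t *: w) *m A *m (y - t *: w)^T) 0 0 =
  (y *m A *m y^T) 0 0 - 2 * t * lam * (y *m w^T) 0 0
   + t ^+ 2 * lam * (w *m w^T) 0 0.
Proof.
move=> As wA.
have e2 : (w *m y^T) 0 0 = (y *m w^T) 0 0.
  have : (w *m y^T)^T = y *m w^T by rewrite trmx_mul trmxK.
  by move/matrixP/(_ 0 0); rewrite [LHS]mxE.
have e1 : (y *m A *m w^T) 0 0 = lam * (y *m w^T) 0 0.
  have -> : y *m A *m w^T = (w *m A *m y^T)^T.
    by rewrite !trmx_mul trmxK As mulmxA.
  by rewrite mxE wA -scalemxAl mxE e2.
have -> : (y - t *: w)^T = y^T - t *: w^T by apply/matrixP => i j; rewrite !mxE.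
have hw : (t *: w) *m A = (t * lam) *: w by rewrite -scalemxAl wA scalerA.
have h2 (M : 'M[R]_(1,m)) (N : 'M[R]_(m,1)) (a : R) : M *m (a *: N) = a *: (M *m N).
  by rewrite scalemxAr.
have h3 (M : 'M[R]_(1,m)) (N : 'M[R]_(m,1)) (a : R) : (a *: M) *m N = a *: (M *m N).
  by rewrite scalemxAl.
rewrite mulmxBl hw (mulmxBr (y *m A - (t * lam) *: w)) !mulmxBl !h2 !h3 !mxE. move: e1 e2; rewrite !mxE => e1 e2. rewrite e1 e2.
ring.
Qed.

Lemma mxBZE (R : pzRingType) p q (M N : 'M[R]_(p,q)) a i j :
  (M - a *: N) i j = M i j - a * N i j.
Proof. by rewrite !mxE. Qed.

Section Basics.
Variable R : rcfType.
Variable V : finType.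
Variable E : {set {set V}}.
Local Notation n := #|V|.
Local Notation m := #|E|.
Local Notation Inc := (incidence E R).
Local Notation L1 := (edge_laplacian E R).
Local Notation dg i := (hdeg E (enum_val i)).

Lemma hdegE (v : V) : hdeg E v = (\sum_(j < m) (v \in (enum_val j : {set V})))%N.
Proof.
rewrite /hdeg -sum1_card.
rewrite -(big_enum_val (fun e : {set V} => (v \in e) : nat)) /=.
rewrite big_mkcond [RHS]big_mkcond /=; apply: eq_bigr => e _.
by rewrite inE; case: (e \in E); case: (v \in e).
Qed.

Lemma Inc_rowsum (i : 'I_n) : \sum_j Inc i j = (dg i)%:R.
Proof. by rewrite hdegE natr_sum; apply: eq_bigr => j _; rewrite mxE. Qed.

Lemma Inc_colsum (j : 'I_m) : \sum_i Inc i j = #|(enum_val j : {set V})|%:R.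
Proof.
have -> : #|(enum_val j : {set V})| = (\sum_(v : V) (v \in (enum_val j : {set V})))%N.
  rewrite -sum1_card big_mkcond; apply: eq_bigr => v _.
  by case: (_ \in _).
rewrite natr_sum (big_enum_val (A := V)) /=.
by apply: eq_bigr => i _; rewrite mxE.
Qed.

Lemma sum_deg : (\sum_v hdeg E v = \sum_(j < m) #|(enum_val j : {set V})|)%N.
Proof.
under eq_bigr do rewrite hdegE.
rewrite exchange_big /=; apply: eq_bigr => j _.
rewrite -sum1_card [RHS]big_mkcond; apply: eq_bigr => v _; by case: (_ \in _).
Qed.

Lemma card_sumR (T : finType) (P : pred T) :
  (#|P|%:R : R) = \sum_(t : T) ((P t : nat)%:R).
Proof. rewrite -sum1_card natr_sum big_mkcond /=; apply: eq_bigr => t _; rewrite unfold_in; by case: (P t). Qed.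

Definition dv : 'rV[R]_n := \row_i ((dg i)%:R)^-1.

Lemma DinvE : Dinv E R = diag_mx dv.
Proof.
apply/matrixP => i j; rewrite !mxE.
by case: eqVneq => [->|_]; rewrite ?mulr1n ?mul1r ?mulr0n ?mul0r.
Qed.

Lemma L1_sym : L1^T = L1.
Proof.
by rewrite /edge_laplacian !trmx_mul trmxK DinvE tr_diag_mx mulmxA.
Qed.

Lemma qL1 (x : 'rV[R]_m) :
  (x *m L1 *m x^T) 0 0 = \sum_i ((x *m Inc^T) 0 i) ^+ 2 / (dg i)%:R.
Proof.
rewrite /edge_laplacian DinvE.
have -> : x *m (Inc^T *m diag_mx dv *m Inc) *m x^T =
   (x *m Inc^T) *m diag_mx dv *m (x *m Inc^T)^T.
  by rewrite trmx_mul trmxK !mulmxA.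
rewrite mxE; apply: eq_bigr => i _.
by rewrite mul_mx_diag !mxE mulrAC expr2.
Qed.

Lemma rowsum_w (c : nat) : uniform E c -> no_isolated E ->
  const_mx 1 *m L1 = c%:R *: (const_mx 1 : 'rV[R]_m).
Proof.
move=> unif noiso.
rewrite /edge_laplacian DinvE.
have h1 : (const_mx 1 : 'rV[R]_m) *m Inc^T *m diag_mx dv = const_mx 1.
  apply/matrixP => i k; rewrite mul_mx_diag !mxE.
  under eq_bigr do rewrite !mxE mul1r.
  have hk : \sum_(j0 < m) ((enum_val k \in (enum_val j0 : {set V})) : nat)%:R = (dg k)%:R :> R.
    by rewrite -(Inc_rowsum k); apply: eq_bigr => j _; rewrite mxE.
  by rewrite hk mulfV // pnatr_eq0 -lt0n.
rewrite !mulmxA h1; apply/matrixP => i j; rewrite !mxE.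
under eq_bigr do rewrite mxE mul1r.
rewrite mulr1 Inc_colsum unif //; exact: enum_valP.
Qed.

Section Coloring.
Variable k : nat.
Variable col : {set V} -> 'I_k.
Hypothesis Hcol : forall e f, e \in E -> f \in E -> e != f -> col e = col f ->
   [disjoint e & f].

Definition xc (a : 'I_k) : 'rV[R]_m := \row_j ((col (enum_val j) == a)%:R).

Lemma sum_col (e : {set V}) : \sum_(a < k) ((col e == a)%:R : R) = 1.
Proof.
rewrite (bigD1 (col e)) //= eqxx big1 ?addr0 // => a /negbTE.
by rewrite eq_sym => ->.
Qed.

Definition ac (a : 'I_k) (i : 'I_n) : R := (xc a *m Inc^T) 0 i.

Lemma acE a i : ac a i =
  #|[pred j : 'I_m | (col (enum_val j) == a) && (enum_val i \in (enum_val j : {set V}))]|%:R.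
Proof.
rewrite /ac mxE card_sumR; apply: eq_bigr => j _.
rewrite !mxE; have hb (b1 b2 : bool) : (b1%:R * b2%:R : R) = (b1 && b2)%:R by case: b1; case: b2; rewrite /= ?mul1r ?mul0r. exact: hb.
Qed.

Lemma ac_sq a i : ac a i ^+ 2 = ac a i.
Proof.
rewrite acE.
have : (#|[pred j : 'I_m | (col (enum_val j) == a) &&
     (enum_val i \in (enum_val j : {set V}))]| <= 1)%N.
  apply/card_le1_eqP => j1 j2; rewrite !inE => /andP[/eqP h1 v1] /andP[/eqP h2 v2].
  apply/eqP; apply/negPn/negP => hne.
  have hne' : (enum_val j1 : {set V}) != enum_val j2.
    by apply: contra hne => /eqP /enum_val_inj ->.
  have := Hcol (enum_valP j1) (enum_valP j2) hne' (etrans h1 (esym h2)).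
  by move/disjointFr => /(_ _ v1); rewrite v2.
move: (#|[pred j : 'I_m | (col (enum_val j) == a) &&
     (enum_val i \in (enum_val j : {set V}))]|) => N.
by case: N => [|[|//]] _; rewrite ?expr0n ?expr1n.
Qed.

Lemma ac_sum i : \sum_a ac a i = (dg i)%:R.
Proof.
rewrite -Inc_rowsum.
under eq_bigr do rewrite /ac mxE.
rewrite exchange_big /=; apply: eq_bigr => j _.
under eq_bigr do rewrite !mxE.
by rewrite -mulr_suml sum_col mul1r mxE.
Qed.

Lemma sum_qL1 : no_isolated E -> \sum_a (xc a *m L1 *m (xc a)^T) 0 0 = n%:R.
Proof.
move=> noiso.
under eq_bigr do rewrite qL1.
rewrite exchange_big /= -[X in _ = X%:R]card_ord card_sumR; apply: eq_bigr => i _.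
under eq_bigr do rewrite -/(ac _ _) ac_sq.
by rewrite -mulr_suml ac_sum mulfV // pnatr_eq0 -lt0n.
Qed.

Definition sc (a : 'I_k) : R := \sum_j xc a 0 j.

Lemma sum_sc : \sum_a sc a = m%:R.
Proof.
rewrite /sc exchange_big /=.
rewrite -[X in _ = X%:R]card_ord card_sumR; apply: eq_bigr => j _.
under eq_bigr do rewrite mxE.
by rewrite sum_col.
Qed.

Lemma xx_sc a : (xc a *m (xc a)^T) 0 0 = sc a.
Proof.
rewrite mxE; apply: eq_bigr => j _; rewrite !mxE.
by case: (_ == _); rewrite ?mulr1 ?mulr0.
Qed.

End Coloring.

Lemma main_gen (c : nat) (mu : R) (chi : nat) :
  (1 <= c)%N -> uniform E c -> (0 < m)%N -> no_isolated E ->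
  (forall a, eigenvalue L1 a -> mu <= a) ->
  mu < c%:R / avg_deg E R ->
  is_strong_chromatic_index E chi ->
  chi%:R = (c%:R - mu) / (c%:R / avg_deg E R - mu) ->
  exists Y : 'M[R]_(chi.-1, m), row_free Y /\ Y *m L1 = mu *: Y.
Proof.
move=> c1 unif m0 noiso Lmin mult [[col Hcol] _] chiE.
pose j0 : 'I_m := Ordinal m0.
have n0 : (0 < n)%N.
  have : (0 < #|(enum_val j0 : {set V})|)%N by rewrite unif ?enum_valP.
  by case/card_gt0P => v _; apply/card_gt0P; exists v.
have sdeg : (\sum_v hdeg E v = c * m)%N.
  rewrite sum_deg (eq_bigr (fun _ => c)) => [|j _]; last by rewrite unif ?enum_valP.
  by rewrite big_const_ord iter_addn_0 mulnC.
have nR : n%:R != 0 :> R by rewrite pnatr_eq0 -lt0n.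
have mR : m%:R != 0 :> R by rewrite pnatr_eq0 -lt0n.
have cR : c%:R != 0 :> R by rewrite pnatr_eq0 -lt0n.
have cavg : c%:R / avg_deg E R = n%:R / m%:R.
  by rewrite /avg_deg sdeg natrM; field; rewrite nR mR cR.
rewrite cavg in mult chiE.
have nle : (n <= c * m)%N.
  have : (\sum_(v : V) 1 <= \sum_v hdeg E v)%N by apply: leq_sum => v _; exact: noiso.
  by rewrite sum1_card sdeg.
set lam := c%:R - mu.
have lam0 : 0 < lam.
  rewrite /lam subr_gt0; apply: (lt_le_trans mult).
  by rewrite ler_pdivrMr ?ltr0n -?lt0n // -natrM ler_nat.
have chi0 : (0 < chi)%N := leq_ltn_trans (leq0n _) (ltn_ord (col (enum_val j0))).
have kR : chi%:R != 0 :> R by rewrite pnatr_eq0 -lt0n.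
have D0 : n%:R / m%:R - mu != 0 by rewrite subr_eq0 gt_eqF.
have hk : chi%:R * (n%:R / m%:R - mu) = lam by rewrite chiE divfK.
set A := L1 - mu%:M.
have psd := psd_min L1_sym Lmin.
set w : 'rV[R]_m := const_mx 1.
have wA : w *m A = lam *: w.
  by rewrite mulmxBr (rowsum_w unif noiso) mul_mx_scalar scalerBl.
have Asym : A^T = A by rewrite /A linearB /= L1_sym tr_scalar_mx.
have wwT : (w *m w^T) 0 0 = m%:R.
  rewrite mxE -[X in _ = X%:R]card_ord card_sumR; apply: eq_bigr => j _.
  by rewrite !mxE mulr1.
have xwT a : (xc col a *m w^T) 0 0 = sc col a.
  by rewrite mxE; apply: eq_bigr => j _; rewrite !mxE mulr1.
have qx a : (xc col a *m A *m (xc col a)^T) 0 0 =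
    (xc col a *m L1 *m (xc col a)^T) 0 0 - mu * sc col a.
  by rewrite mulmxBr mul_mx_scalar mulmxBl -scalemxAl mxBZE xx_sc.
pose y a := xc col a - (sc col a / m%:R) *: w.
pose qy a := (y a *m A *m (y a)^T) 0 0.
have Teq a : qy a + lam / m%:R * (sc col a - m%:R / chi%:R) ^+ 2 =
   (xc col a *m L1 *m (xc col a)^T) 0 0 - (mu + 2 * lam / chi%:R) * sc col a
   + lam * m%:R / chi%:R ^+ 2.
  rewrite /qy /y (qexp _ _ Asym wA) qx xwT wwT. field. by rewrite kR mR.
have Tsum : \sum_a (qy a + lam / m%:R * (sc col a - m%:R / chi%:R) ^+ 2) = 0.
  rewrite (eq_bigr _ (fun a _ => Teq a)) big_split sumrB /= sum_qL1 //.
  rewrite -mulr_sumr sum_sc sumr_const card_ord -mulr_natr.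
  rewrite -hk; field; by rewrite kR mR.
have ge1 a : 0 <= qy a by exact: (psd (y a)).1.
have ge2 a : 0 <= lam / m%:R * (sc col a - m%:R / chi%:R) ^+ 2.
  by apply: mulr_ge0; [apply: divr_ge0; [apply: ltW|apply: ler0n]|apply: sqr_ge0].
have each a : qy a = 0 /\ sc col a = m%:R / chi%:R.
  have := psumr_eq0P (fun a _ => addr_ge0 (ge1 a) (ge2 a)) Tsum (i := a) isT.
  move/eqP; rewrite paddr_eq0 // => /andP[/eqP q0 /eqP s0]; split => //.
  move/eqP: s0; rewrite mulf_eq0 mulf_eq0 invr_eq0 (negbTE mR) (gt_eqF lam0) /=.
  by rewrite sqrf_eq0 subr_eq0 => /eqP.
have yA a : (xc col a - chi%:R^-1 *: w) *m A = 0.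
  have [q0 s0] := each a; move: ((psd (y a)).2 q0); rewrite /y s0.
  have -> : m%:R / chi%:R / m%:R = chi%:R^-1 :> R by field; rewrite kR mR.
  done.
pose wid (r : 'I_chi.-1) : 'I_chi := widen_ord (leq_pred chi) r.
have widE r1 r2 : (wid r1 == wid r2) = (r1 == r2) by rewrite -val_eqE.
have lst_lt : (chi.-1 < chi)%N by rewrite ltn_predL.
pose lst : 'I_chi := Ordinal lst_lt.
have edge a : exists j : 'I_m, col (enum_val j) = a.
  have [j /eqP hj|none] := pickP (fun j : 'I_m => col (enum_val j) == a).
    by exists j.
  have : sc col a = 0.
    by apply: big1 => j _; rewrite mxE none.
  by rewrite (each a).2 => /eqP; rewrite mulf_eq0 invr_eq0 (negbTE kR) (negbTE mR).
pose Y : 'M[R]_(chi.-1, m) :=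
  \matrix_(r, j) ((col (enum_val j) == wid r)%:R - chi%:R^-1).
have rowY r : row r Y = xc col (wid r) - chi%:R^-1 *: w.
  by apply/rowP => j; rewrite !mxE mulr1.
exists Y; split; last first.
  apply/row_matrixP => r; rewrite row_mul rowY.
  have := yA (wid r); rewrite mulmxBr mul_mx_scalar => /eqP; rewrite subr_eq0 => /eqP ->.
  by rewrite -rowY; apply/rowP => j; rewrite !mxE.
have inj (v : 'rV[R]_(chi.-1)) : v *m Y = 0 -> v = 0.
  move=> vY.
  set S := \sum_r v 0 r.
  have vYE j : (v *m Y) 0 j =
      \sum_r v 0 r * (col (enum_val j) == wid r)%:R - chi%:R^-1 * S.
    rewrite mxE /S mulr_sumr -sumrB; apply: eq_bigr => r _; rewrite mxE.
    by rewrite mulrBr [X in _ - X]mulrC.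
  have S0 : S = 0.
    have [jl hjl] := edge lst.
    have := vYE jl; rewrite vY mxE big1 => [|r _]; last first.
      rewrite hjl; case: eqP => [/(congr1 val) /= hr|_]; last by rewrite mulr0.
      by move: (ltn_ord r); rewrite -hr ltnn.
    move/esym/eqP; rewrite sub0r oppr_eq0 mulf_eq0 invr_eq0 (negbTE kR) /=.
    by move/eqP.
  apply/rowP => r0; rewrite mxE.
  have [j hj] := edge (wid r0).
  have := vYE j; rewrite vY mxE S0 mulr0 subr0 (bigD1 r0) //= hj eqxx mulr1.
  rewrite big1 ?addr0 => [<-//|r hr].
  by rewrite widE eq_sym (negbTE hr) mulr0.
rewrite -kermx_eq0; apply/eqP/row_matrixP => r; rewrite row0; apply: inj.
by rewrite -row_mul mulmx_ker row0.
Qed.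

End Basics.

Unset Implicit Arguments.
Theorem mainTheorem16 (R : rcfType) (V : finType) (E : {set {set V}})
    (c : nat) (mu1 : R) (chi : nat) :
  (1 <= c)%N ->
  uniform E c ->
  (1 <= #|E|)%N ->
  no_isolated E ->
  smallest_eigenvalue (edge_laplacian E R) mu1 ->
  mu1 < c%:R / avg_deg E R ->
  is_strong_chromatic_index E chi ->
  chi%:R = (c%:R - mu1) / (c%:R / avg_deg E R - mu1) ->
  (mu1 = 0 ->
     exists k : nat,
       (forall v, hdeg E v = k) /\ k%:R = avg_deg E R /\ chi = k /\
       (k - 1 <= eigmult (edge_laplacian E R) 0)%N) /\
  (0 < mu1 ->
     (chi - 1 <= eigmult (edge_laplacian E R) mu1)%N /\
     (chi - 1 <= eigmult (norm_laplacian E R) mu1)%N).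
Proof.
move=> c1 unif m1 noiso [eigmu Lmin] mult chiP chiE.
have [Y [Yfree YL]] := main_gen c1 unif m1 noiso Lmin mult chiP chiE.
have rkY : \rank Y = chi.-1 by apply/eqP.
have eig1 : (chi - 1 <= eigmult (edge_laplacian E R) mu1)%N.
  by rewrite /eigmult subn1 -rkY; apply: mxrankS; apply/eigenspaceP.
split.
  move=> mu0; exists chi.
  have avg0 : avg_deg E R != 0.
    by apply: contraTneq mult => ->; rewrite invr0 mulr0 mu0 ltxx.
  have cR : c%:R != 0 :> R by rewrite pnatr_eq0 -lt0n.
  have chiA : chi%:R = avg_deg E R.
    by rewrite chiE mu0 !subr0; field; rewrite avg0 cR.
  have [[col Hcol] _] := chiP.
  have degle v : (hdeg E v <= chi)%N.
    rewrite /hdeg -[X in (_ <= X)%N]card_ord; apply: (leq_card_in col).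
    move=> e1 e2; rewrite !inE => /andP[e1E v1] /andP[e2E v2] hc.
    apply/eqP; apply/negPn/negP => hne.
    by have := Hcol _ _ e1E e2E hne hc; move/disjointFr => /(_ _ v1); rewrite v2.
  have nR : #|V|%:R != 0 :> R.
    by apply: contra avg0 => /eqP h; rewrite /avg_deg h invr0 mulr0.
  have sumE : \sum_v ((chi%:R : R) - (hdeg E v)%:R) = 0.
    rewrite sumrB sumr_const -natr_sum.
    move: chiA; rewrite /avg_deg => /(congr1 (fun x => x * #|V|%:R)).
    by rewrite divfK // => <-; rewrite mulr_natr subrr.
  split.
    move=> v; apply/eqP; rewrite -(eqr_nat R) eq_sym -subr_eq0; apply/eqP.
    by apply: (psumr_eq0P _ sumE) => // u _; rewrite subr_ge0 ler_nat degle.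
  split => //; split => //.
  by move: eig1; rewrite mu0.
move=> mupos; split => //.
set Inc := incidence E R.
set Z := Y *m Inc^T.
have ZL : Z *m norm_laplacian E R = mu1 *: Z.
  rewrite /norm_laplacian /Z !mulmxA -[Y *m _ *m _ *m _]mulmxA -[Y *m _ *m _]mulmxA.
  rewrite -/Inc.
  have -> : Y *m (Inc^T *m (Dinv E R *m Inc)) = mu1 *: Y.
    by rewrite -YL /edge_laplacian !mulmxA.
  by rewrite scalemxAl.
have mu0 : mu1 != 0 by rewrite gt_eqF.
have rkZ : (chi.-1 <= \rank Z)%N.
  have h : \rank (Z *m (Dinv E R *m Inc)) = chi.-1.
    have -> : Z *m (Dinv E R *m Inc) = mu1 *: Y by rewrite /Z -YL /edge_laplacian !mulmxA.
    by rewrite (eqmx_scale _ mu0).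
  by move: (mxrankM_maxl Z (Dinv E R *m Inc)); rewrite h.
rewrite /eigmult subn1; apply: (leq_trans rkZ); apply: mxrankS.
by apply/eigenspaceP.
Qed.
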